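(* Let $N$ be a positive integer, $L>0$, and $\zeta=(\zeta_0,\dots,\zeta_{N+2})\in\mathbb{R}^{N+3}$ with $\zeta_0>\zeta_1>\dots>\zeta_{N+1}>\zeta_{N+2}=0$. With $f_k$ and $W^\zeta$ as defined in the context and $W^{\zeta,*}=\min_{y\in\mathbb{R}^{N+1}}W^\zeta(y)$, if $\bar y=(\bar y_0,\dots,\bar y_N)\in\mathbb{R}^{N+1}$ satisfies $\bar y_k\geq 0$ for some $k\in\{0,\dots,N\}$, then \[ W^\zeta(\bar y)-W^{\zeta,*}\geq f_k. \]
   Context: Let $e_0,\dots,e_N$ denote the standard unit vectors of $\mathbb{R}^{N+1}$ (zero-based indexing). Define for $i=0,\dots,N+1$: $x_i=-\sum_{j=0}^{i-1}\frac{\zeta_j-\zeta_{i+1}}{\sqrt{\zeta_j-\zeta_{j+1}}}e_j\in\mathbb{R}^{N+1}$; $g_i=L\sqrt{\zeta_i-\zeta_{i+1}}\,e_i$ for $i=0,\dots,N$ and $g_{N+1}=0$; $f_i=\frac L2(\zeta_i+\zeta_{i+1})$ for $i=0,\dots,N$ and $f_{N+1}=0$. For $y\in\mathbb{R}^{N+1}$, $\nu\in\mathbb{R}^{N+1}$, $\alpha=(\alpha_0,\dots,\alpha_{N+1})\in\mathbb{R}^{N+2}$ let $w^\zeta(y,\nu,\alpha)=\frac L2\|y+\nu-\sum_{i=0}^{N+1}\alpha_i(x_i-\frac1Lg_i)\|^2+\sum_{i=0}^{N+1}\alpha_i(f_i-\frac1{2L}\|g_i\|^2)$, and $W^\zeta(y)=\min\{w^\zeta(y,\nu,\alpha):\nu\in\mathbb{R}^{N+1}_+,\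 \alpha\in\Delta_{N+2}\}$, where $\mathbb{R}^{N+1}_+$ is the nonnegative orthant and $\Delta_{N+2}=\{\alpha\in\mathbb{R}^{N+2}:\alpha_i\geq0,\ \sum_i\alpha_i=1\}$. *)

(* Defs.v *)
From HB Require Import structures.
From mathcomp Require Import all_boot all_order all_algebra.
From mathcomp Require Import classical_sets reals.
Set Implicit Arguments. Unset Strict Implicit. Unset Printing Implicit Defensive.
Import Order.TTheory GRing.Theory Num.Theory.
Local Open Scope ring_scope.
Local Open Scope classical_set_scope.

Section Defs.
Variables (R : realType) (N : nat) (L : R) (zeta : nat -> R).

(* j-th coordinate (0 <= j <= N) of x_i, i = 0..N+1 *)
Definition xvec (i j : nat) : R :=
  if (j < i)%N then - ((zeta j - zeta i.+1) / Num.sqrt (zeta j - zeta j.+1)) else 0.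

(* j-th coordinate of g_i; g_{N+1} = 0 *)
Definition gvec (i j : nat) : R :=
  if (i <= N)%N && (j == i) then L * Num.sqrt (zeta i - zeta i.+1) else 0.

Definition fval (i : nat) : R :=
  if (i <= N)%N then L / 2 * (zeta i + zeta i.+1) else 0.

Definition gnorm2 (i : nat) : R := \sum_(j < N.+1) gvec i j ^+ 2.

Definition wz (y nu : 'I_N.+1 -> R) (alpha : 'I_N.+2 -> R) : R :=
  L / 2 * \sum_(j < N.+1)
      (y j + nu j - \sum_(i < N.+2) alpha i * (xvec i j - gvec i j / L)) ^+ 2
  + \sum_(i < N.+2) alpha i * (fval i - gnorm2 i / (2 * L)).

Definition feasible (nu : 'I_N.+1 -> R) (alpha : 'I_N.+2 -> R) : Prop :=
  (forall j, 0 <= nu j) /\ (forall i, 0 <= alpha i) /\ \sum_(i < N.+2) alpha i = 1.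

(* W^zeta(y): the minimum (taken as infimum) of w over nu >= 0, alpha in the simplex *)
Definition Wz (y : 'I_N.+1 -> R) : R :=
  inf [set r | exists nu alpha, feasible nu alpha /\ r = wz y nu alpha].

Definition Wzstar : R := inf (range Wz).

End Defs.

(* Main.v *)
Require Import Defs.
From HB Require Import structures.
From mathcomp Require Import all_boot all_order all_algebra.
From mathcomp Require Import classical_sets reals.
From mathcomp Require Import ring lra.
Import Order.TTheory GRing.Theory Num.Theory.
Local Open Scope ring_scope.

Lemma zmono (R : realType) (N : nat) (zeta : nat -> R) :
  (forall i : nat, (i <= N.+1)%N -> zeta i.+1 < zeta i) ->
  forall m n, (m <= n)%N -> (n <= N.+2)%N -> zeta n <= zeta m.
Proof.
move=> hz m; elim=> [|n IH] hmn hn.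
  by rewrite leqn0 in hmn; rewrite (eqP hmn).
case: (ltngtP m n.+1) hmn => // [hlt|->] _; last by [].
apply: le_trans (IH _ _); first exact/ltW/hz.
  by [].
by apply: ltnW.
Qed.

Lemma vcoord (R : realType) (N : nat) (L : R) (zeta : nat -> R) :
  0 < L -> (forall i : nat, (i <= N.+1)%N -> zeta i.+1 < zeta i) ->
  forall i j : nat, (j <= N)%N ->
  xvec zeta i j - gvec N L zeta i j / L =
  if (j <= i)%N then - ((zeta j - zeta i.+1) / Num.sqrt (zeta j - zeta j.+1)) else 0.
Proof.
move=> hL hz i j hj; rewrite /xvec /gvec.
case: (ltngtP j i) => [hji|hij|<-].
- by rewrite andbF mul0r subr0.
- by rewrite andbF mul0r subr0.
- rewrite hj /=.
  have hd : 0 < zeta j - zeta j.+1 by rewrite subr_gt0 hz // (leq_trans hj).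
  have hs : 0 < Num.sqrt (zeta j - zeta j.+1) by rewrite sqrtr_gt0.
  have hs2 := sqr_sqrtr (ltW hd).
  set s := Num.sqrt _ in hs hs2 *.
  rewrite -hs2 expr2; field.
  by rewrite lt0r_neq0 // lt0r_neq0.
Qed.

Lemma cval (R : realType) (N : nat) (L : R) (zeta : nat -> R) :
  0 < L -> (forall i : nat, (i <= N.+1)%N -> zeta i.+1 < zeta i) ->
  zeta N.+2 = 0 ->
  forall i : nat, (i <= N.+1)%N ->
  fval N L zeta i - gnorm2 N L zeta i / (2 * L) = L * zeta i.+1.
Proof.
move=> hL hz hN i hi; rewrite /fval /gnorm2.
case: (leqP i N) => hiN.
  rewrite (bigD1 (@inord N i)) //= big1; last first.
    move=> j hj; rewrite /gvec hiN /=.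
    case: eqP => [hji|_]; last by rewrite expr0n.
    exfalso; move/negP: hj; apply; apply/eqP/val_inj; rewrite /= inordK // hji.
  rewrite /gvec inordK // hiN eqxx /= addr0 exprMn sqr_sqrtr; last first.
    by rewrite subr_ge0 ltW // hz // (leq_trans hiN).
  field; by rewrite lt0r_neq0.
have -> : i = N.+1 by apply/eqP; rewrite eqn_leq hi hiN.
rewrite hN mulr0 big1 ?mul0r ?subr0 // => j _.
by rewrite /gvec ltnn /= expr0n.
Qed.

Lemma wz_lb (R : realType) (N : nat) (L : R) (zeta : nat -> R) :
  0 < L -> (forall i : nat, (i <= N.+1)%N -> zeta i.+1 < zeta i) ->
  zeta N.+2 = 0 ->
  forall (ybar : 'I_N.+1 -> R) (k : 'I_N.+1) nu alpha,
    0 <= ybar k -> feasible nu alpha ->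
    fval N L zeta k <= wz L zeta ybar nu alpha.
Proof.
move=> hL hz hN ybar k nu alpha hy [hnu [hal hsum]].
have hk : (k <= N)%N by rewrite -ltnS.
have mono := @zmono _ _ _ hz.
set d := zeta k - zeta k.+1.
have hd : 0 < d by rewrite subr_gt0 hz // (leq_trans hk).
set s := Num.sqrt d.
have hs : 0 < s by rewrite sqrtr_gt0.
have hs2 : s ^+ 2 = d by rewrite sqr_sqrtr // ltW.
set A := \sum_(i < N.+2) alpha i * (if (k <= i)%N then zeta k - zeta i.+1 else 0).
have hA : 0 <= A.
  apply: sumr_ge0 => i _; apply: mulr_ge0 => //; case: ifP => // hki.
  by rewrite subr_ge0; apply: mono; [exact: leqW | exact: ltn_ord].
have hsumk : \sum_(i < N.+2) alpha i * (xvec zeta i k - gvec N L zeta i k / L) = - (A / s).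
  rewrite /A mulr_suml -sumrN; apply: eq_bigr => i _.
  rewrite vcoord //; case: ifP => _; rewrite /s /d; ring.
have hc : \sum_(i < N.+2) alpha i * (fval N L zeta i - gnorm2 N L zeta i / (2 * L))
          = \sum_(i < N.+2) alpha i * (L * zeta i.+1).
  by apply: eq_bigr => i _; rewrite cval // -ltnS.
have hB : zeta k - A <= \sum_(i < N.+2) alpha i * zeta i.+1.
  rewrite lerBlDr -subr_ge0.
  have -> : \sum_(i < N.+2) alpha i * zeta i.+1 + A - zeta k =
     \sum_(i < N.+2) alpha i * (zeta i.+1 + (if (k <= i)%N then zeta k - zeta i.+1 else 0) - zeta k).
    rewrite -[zeta k in LHS]mul1r -hsum mulr_suml /A -big_split -sumrB /=.
    by apply: eq_bigr => i _; ring.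
  apply: sumr_ge0 => i _; apply: mulr_ge0 => //; case: ifP => hki.
    by rewrite addrCA subrr addr0 subrr.
  rewrite addr0 subr_ge0; apply: mono; first by rewrite ltnNge hki.
  by apply: (leq_trans hk); apply: leqW; apply: leqW.
set t := fun j : 'I_N.+1 => ybar j + nu j - \sum_(i < N.+2) alpha i * (xvec zeta i j - gvec N L zeta i j / L).
have htk : t k = ybar k + nu k + A / s by rewrite /t hsumk opprK.
have hsq : t k ^+ 2 <= \sum_(j < N.+1) t j ^+ 2.
  rewrite (bigD1 k) //= lerDl; apply: sumr_ge0 => j _; exact: sqr_ge0.
have hAs : 0 <= A / s by rewrite divr_ge0 // ltW.
have htk2 : (A / s) ^+ 2 <= t k ^+ 2.
  rewrite htk; have := hnu k; move=> hn; nra.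
have hAd : (A / s) ^+ 2 = A ^+ 2 / d by rewrite expr_div_n hs2.
rewrite /wz hc.
have hL2 : \sum_(i < N.+2) alpha i * (L * zeta i.+1) = L * \sum_(i < N.+2) alpha i * zeta i.+1.
  by rewrite mulr_sumr; apply: eq_bigr => i _; ring.
rewrite hL2 /fval hk.
have step : L / 2 * (A ^+ 2 / d) + L * (zeta k - A) <= L / 2 * \sum_(j < N.+1) t j ^+ 2 + L * \sum_(i < N.+2) alpha i * zeta i.+1.
  apply: lerD; apply: ler_wpM2l.
  - by rewrite divr_ge0 // ltW.
  - by rewrite -hAd (le_trans htk2 hsq).
  - exact: ltW.
  - exact: hB.
apply: le_trans step.
rewrite -subr_ge0 (_ : _ - _ = L / (2 * d) * (A - d) ^+ 2); last first.
  rewrite /d; field; by rewrite -/d lt0r_neq0.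
apply: mulr_ge0; last exact: sqr_ge0.
by rewrite divr_ge0 ?mulr_ge0 ?ltW.
Qed.

Lemma wz_ge0 (R : realType) (N : nat) (L : R) (zeta : nat -> R) :
  0 < L -> (forall i : nat, (i <= N.+1)%N -> zeta i.+1 < zeta i) ->
  zeta N.+2 = 0 ->
  forall (y : 'I_N.+1 -> R) nu alpha, feasible nu alpha -> 0 <= wz L zeta y nu alpha.
Proof.
move=> hL hz hN y nu alpha [hnu [hal hsum]].
rewrite /wz; apply: addr_ge0.
  apply: mulr_ge0; first by rewrite divr_ge0 // ltW.
  by apply: sumr_ge0 => j _; exact: sqr_ge0.
apply: sumr_ge0 => i _; rewrite cval //; last by rewrite -ltnS.
apply: mulr_ge0 => //; apply: mulr_ge0; first exact: ltW.
by rewrite -hN; apply: (@zmono _ _ _ hz).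
Qed.

Definition alpha0 (R : realType) (N : nat) : 'I_N.+2 -> R := fun i => (i == ord_max)%:R.

Lemma feas0 (R : realType) (N : nat) : feasible (fun _ : 'I_N.+1 => (0:R)) (@alpha0 R N).
Proof.
split=> //; split; first by move=> i; rewrite /alpha0 ler0n.
rewrite (bigD1 ord_max) //= /alpha0 eqxx big1 ?addr0 // => i /negbTE ->.
by [].
Qed.

Lemma wz0 (R : realType) (N : nat) (L : R) (zeta : nat -> R) :
  0 < L -> (forall i : nat, (i <= N.+1)%N -> zeta i.+1 < zeta i) ->
  zeta N.+2 = 0 ->
  wz L zeta (fun j : 'I_N.+1 => xvec zeta N.+1 j) (fun _ => 0) (@alpha0 R N) = 0.
Proof.
move=> hL hz hN; rewrite /wz big1 ?mulr0 ?add0r.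
  rewrite (bigD1 ord_max) //= /alpha0 eqxx mul1r big1 ?addr0; last first.
    by move=> i /negbTE ->; rewrite mul0r.
  by rewrite cval // hN mulr0.
move=> j _.
rewrite (bigD1 ord_max) //= /alpha0 eqxx mul1r big1 ?addr0; last first.
  by move=> i /negbTE ->; rewrite mul0r.
by rewrite /gvec /= ltnn /= mul0r subr0 subrr expr0n.
Qed.

Theorem corollary2 (R : realType) (N : nat) (L : R) (zeta : nat -> R) :
  (0 < N)%N -> 0 < L ->
  (forall i : nat, (i <= N.+1)%N -> zeta i.+1 < zeta i) ->
  zeta N.+2 = 0 ->
  forall (ybar : 'I_N.+1 -> R) (k : 'I_N.+1),
    0 <= ybar k ->
    @fval R N L zeta k <= @Wz R N L zeta ybar - @Wzstar R N L zeta.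
Proof.
move=> _ hL hz hN ybar k hy.
have ne : forall y : 'I_N.+1 -> R,
    nonempty [set r | exists nu alpha, feasible nu alpha /\ r = wz L zeta y nu alpha].
  by move=> y; exists (wz L zeta y (fun _ => 0) (@alpha0 R N)), (fun _ => 0), (@alpha0 R N); split => //; exact: feas0.
have W0 : forall y : 'I_N.+1 -> R, 0 <= Wz L zeta y.
  move=> y; apply: lb_le_inf; first exact: ne.
  by move=> r [nu [alpha [hf ->]]]; exact: wz_ge0.
have Wk : fval N L zeta k <= Wz L zeta ybar.
  apply: lb_le_inf; first exact: ne.
  by move=> r [nu [alpha [hf ->]]]; exact: wz_lb.
set y0 := fun j : 'I_N.+1 => xvec zeta N.+1 j.
have Wy0 : Wz L zeta y0 <= 0.
  have := @ge_inf R [set r | exists nu alpha, feasible nu alpha /\ r = wz L zeta y0 nu alpha].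
  apply.
    by exists 0 => r [nu [alpha [hf ->]]]; exact: wz_ge0.
  exists (fun _ => 0), (@alpha0 R N); split; first exact: feas0.
  by rewrite wz0.
have Ws : Wzstar N L zeta <= 0.
  apply: le_trans Wy0.
  have := @ge_inf R (range (Wz L zeta)); apply.
    by exists 0 => r [y _ <-].
  by exists y0.
by rewrite -(subr0 (fval _ _ _ _)); apply: lerB.
Qed.
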